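(* Let $P\subset\mathbb{R}^d$ be a simple $d$-polytope, let $H^+$ be a closed halfspace whose bounding hyperplane $\overline{H}$ contains no vertex of $P$ and meets the interior of $P$, and let $P'=P\cap H^+$. Call a face of $P'$ new if it is contained in $\overline{H}$; for a new face $f'$ of $P'$, its parent face is the face $f$ of $P$ with $f'=\overline{H}\cap f$ (so a new $k$-face has a parent $(k+1)$-face). Let $0\le k\le d-2$ and let $u',v'$ be new $k$-faces of $P'$ with parent $(k+1)$-faces $u,v$ of $P$. Then $u'$ and $v'$ lie on a common $(k+1)$-face of $P'$ if and only if $u$ and $v$ lie on a common $(k+2)$-face of $P$.
   Context: A $d$-polytope is simple if every vertex lies in exactly $d$ facets. A $k$-face is a face of dimension $k$; faces of a polytope are $\emptyset$, the polytope itself, and intersections of the polytope with supporting hyperplanes. *)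

(* Defs.v *)
From HB Require Import structures.
From mathcomp Require Import all_boot all_order all_algebra.
From mathcomp Require Import boolp classical_sets reals.
From mathcomp.analysis Require Import topology_theory.topology normedtype_theory.normedtype.
Import numFieldTopology.Exports numFieldNormedType.Exports.
Set Implicit Arguments. Unset Strict Implicit. Unset Printing Implicit Defensive.
Import Order.TTheory GRing.Theory Num.Theory.
Local Open Scope ring_scope.
Local Open Scope classical_set_scope.

Section Polytopes.
Variables (R : realType) (d : nat).
Local Notation pt := 'rV[R]_d.

Definition dotp (a x : pt) : R := \sum_(i < d) a ord0 i * x ord0 i.

Definition conv (V : seq pt) : set pt :=
  [set x | exists w : 'I_(size V) -> R,
     [/\ forall i, 0 <= w i, \sum_i w i = 1 & x = \sum_i w i *: V`_(val i)]].

Definition polytope (P : set pt) : Prop := exists V : seq pt, P = conv V.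

(* affine independence of n points: lifted points (p_i, 1) are linearly independent *)
Definition affindep n (p : 'I_n -> pt) : bool :=
  row_free (\matrix_(i < n) row_mx (p i) (1 : 'rV[R]_1)).

Definition affdim (S : set pt) (k : nat) : Prop :=
  (exists p : 'I_k.+1 -> pt, (forall i, S (p i)) /\ affindep p) /\
  (forall p : 'I_k.+2 -> pt, (forall i, S (p i)) -> ~~ affindep p).

Definition face (P F : set pt) : Prop :=
  F = set0 \/ F = P \/
  exists (c : pt) (b : R), c != 0 /\ (forall x, P x -> dotp c x <= b) /\
    F = P `&` [set x | dotp c x = b].

Definition kface (P : set pt) (k : nat) (F : set pt) : Prop :=
  face P F /\ affdim F k.

Definition dpolytope (P : set pt) : Prop := polytope P /\ affdim P d.

Definition simple_polytope (P : set pt) : Prop :=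
  dpolytope P /\
  forall v, kface P 0 v ->
    exists Fs : 'I_d -> set pt,
      injective Fs /\ (forall i, kface P d.-1 (Fs i) /\ v `<=` Fs i) /\
      (forall F, kface P d.-1 F -> v `<=` F -> exists i, F = Fs i).

Definition hyperplane (a : pt) (b : R) : set pt := [set x | dotp a x = b].
Definition halfspace (a : pt) (b : R) : set pt := [set x | b <= dotp a x].

End Polytopes.

(* Main.v *)
Require Import Defs.
From HB Require Import structures.
From mathcomp Require Import all_boot all_order all_algebra.
From mathcomp Require Import boolp classical_sets reals.
From mathcomp.analysis Require Import topology_theory.topology normedtype_theory.normedtype.
Import numFieldTopology.Exports numFieldNormedType.Exports.
Import Order.TTheory GRing.Theory Num.Theory.
Local Open Scope ring_scope.
Local Open Scope classical_set_scope.
Set Implicit Arguments. Unset Strict Implicit. Unset Printing Implicit Defensive.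
From mathcomp Require Import ring lra.

Section LA.
Variables (R : realType) (d : nat).
Local Notation pt := 'rV[R]_d.

Definition lft (x : pt) : 'rV[R]_(d + 1) := row_mx x (1 : 'rV[R]_1).
Definition mat n (p : 'I_n -> pt) : 'M[R]_(n, d + 1) := \matrix_(i < n) lft (p i).

Lemma affindepE n (p : 'I_n -> pt) : affindep p = row_free (mat p).
Proof. by []. Qed.

Lemma dotpE (c x : pt) : dotp c x = (x *m c^T) 0 0.
Proof. rewrite /dotp !mxE; apply: eq_bigr => i _; rewrite !mxE mulrC. by []. Qed.

Lemma dotpD (c x y : pt) : dotp c (x + y) = dotp c x + dotp c y.
Proof. by rewrite !dotpE mulmxDl mxE. Qed.

Lemma dotpZ (c x : pt) s : dotp c (s *: x) = s * dotp c x.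
Proof. by rewrite !dotpE -scalemxAl mxE. Qed.

Lemma dotp_sum n (c : pt) (w : 'I_n -> R) (V : 'I_n -> pt) :
  dotp c (\sum_i w i *: V i) = \sum_i w i * dotp c (V i).
Proof.
rewrite dotpE mulmx_suml summxE; apply: eq_bigr => i _.
by rewrite -scalemxAl mxE dotpE.
Qed.

Lemma dotpDl (c e x : pt) : dotp (c + e) x = dotp c x + dotp e x.
Proof. by rewrite /dotp -big_split; apply: eq_bigr => i _; rewrite !mxE mulrDl. Qed.

Lemma dotpNl (c x : pt) : dotp (- c) x = - dotp c x.
Proof. by rewrite /dotp -sumrN; apply: eq_bigr => i _; rewrite !mxE mulNr. Qed.

Lemma dotpZl (c x : pt) s : dotp (s *: c) x = s * dotp c x.
Proof. by rewrite /dotp mulr_sumr; apply: eq_bigr => i _; rewrite !mxE mulrA. Qed.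

Lemma dotp0l (x : pt) : dotp 0 x = 0.
Proof. by rewrite /dotp big1 // => i _; rewrite mxE mul0r. Qed.

Lemma dotpBl (c e x : pt) : dotp (c - e) x = dotp c x - dotp e x.
Proof. by rewrite dotpDl dotpNl. Qed.

Lemma dotp_comb (c x y : pt) s :
  dotp c (s *: x + (1 - s) *: y) = s * dotp c x + (1 - s) * dotp c y.
Proof. by rewrite dotpD !dotpZ. Qed.

Lemma lft_comb (x y : pt) s :
  lft (s *: x + (1 - s) *: y) = s *: lft x + (1 - s) *: lft y.
Proof.
rewrite /lft !scale_row_mx add_row_mx; congr row_mx.
by rewrite -scalerDl addrC subrK scale1r.
Qed.

Lemma lft_fun (x : pt) (w : 'cV[R]_(d + 1)) :
  lft x *m w = (dotp (usubmx w)^T x + dsubmx w 0 0)%:M.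
Proof.
rewrite -[w in LHS]vsubmxK /lft mul_row_col dotpE trmxK.
rewrite {1}[dsubmx w]mx11_scalar mul1mx.
apply/matrixP => i j; rewrite !ord1 !mxE /= !mulr1n.
by [].
Qed.

Definition fcol (c : pt) (beta : R) : 'cV[R]_(d + 1) := col_mx c^T (- beta)%:M.

Lemma lft_fcol (x c : pt) beta : lft x *m fcol c beta = (dotp c x - beta)%:M.
Proof.
by rewrite lft_fun /fcol col_mxKu col_mxKd trmxK mxE /= mulr1n.
Qed.

Lemma free_app m (A : 'M[R]_(m, d + 1)) (v : 'rV[R]_(d + 1)) :
  row_free A -> ~~ (v <= A)%MS -> row_free (col_mx A v).
Proof.
move=> fA nvA; apply: inj_row_free => z.
rewrite -[z]hsubmxK mul_row_col => z0.
have Hr : rsubmx z = 0.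
  apply/eqP/negPn/negP => nz.
  have s0 : rsubmx z 0 0 != 0.
    move: nz; apply: contra => /eqP e; apply/eqP; rewrite [rsubmx z]mx11_scalar e.
    by apply/matrixP => i j; rewrite !ord1 !mxE.
  move: nvA; rewrite -[v]scale1r -(mulVf s0) -scalerA.
  have -> : rsubmx z 0 0 *: v = - (lsubmx z *m A).
    rewrite -mul_scalar_mx -mx11_scalar; apply/eqP.
    by rewrite -addr_eq0 addrC z0.
  by move/negP; apply; rewrite scalemx_sub // eqmx_opp submxMl.
move: z0; rewrite Hr mul0mx addr0 => /eqP; rewrite mulmx_free_eq0 // => /eqP ->.
by rewrite row_mx0.
Qed.

Lemma free_le m n (B : 'M[R]_(m, d + 1)) (A : 'M[R]_(n, d + 1)) :
  row_free B -> (B <= A)%MS -> (m <= n)%N.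
Proof.
move=> fB sBA; move: (mxrankS sBA); rewrite (eqP fB) => h.
exact: leq_trans h (rank_leq_row A).
Qed.

Definition app n (p : 'I_n -> pt) (y : pt) : 'I_(n + 1) -> pt :=
  fun i => match split i with inl j => p j | inr _ => y end.

Lemma mat_app n (p : 'I_n -> pt) y : mat (app p y) = col_mx (mat p) (lft y).
Proof.
apply/matrixP => i j; rewrite /mat /app mxE.
case: splitP => k ek.
  have -> : i = lshift 1 k by apply: val_inj.
  by rewrite col_mxEu mxE.
have -> : i = rshift n k by apply: val_inj.
by rewrite col_mxEd !ord1.
Qed.

Lemma app_in (S : set pt) n (p : 'I_n -> pt) y :
  (forall i, S (p i)) -> S y -> forall i, S (app p y i).
Proof. by move=> Sp Sy i; rewrite /app; case: split. Qed.

Lemma row_mat n (p : 'I_n -> pt) i : row i (mat p) = lft (p i).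
Proof. by rewrite rowK. Qed.

Lemma sub_mat_app n (p : 'I_n -> pt) y : (mat p <= mat (app p y))%MS.
Proof. by rewrite mat_app -addsmxE addsmxSl. Qed.

Lemma lft_app n (p : 'I_n -> pt) y : (lft y <= mat (app p y))%MS.
Proof. by rewrite mat_app -addsmxE addsmxSr. Qed.

End LA.

Section Dim.
Variables (R : realType) (d : nat).
Local Notation pt := 'rV[R]_d.

Definition pdim (S : set pt) (n : nat) : bool :=
  `[< exists p : 'I_n -> pt, (forall i, S (p i)) /\ row_free (mat p) >].

Lemma pdim0 S : exists n, pdim S n.
Proof.
exists 0%N; apply/asboolP; exists (fun _ => 0) ; split => [[]//|].
by rewrite /row_free -leqn0 rank_leq_row.
Qed.

Lemma pdim_bound S n : pdim S n -> (n <= d + 1)%N.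
Proof.
by move/asboolP => [p [_ fp]]; move: (rank_leq_col (mat p)); rewrite (eqP fp).
Qed.

Definition dimS (S : set pt) : nat := ex_maxn (pdim0 S) (@pdim_bound S).

Lemma dimS_ex S : exists p : 'I_(dimS S) -> pt, (forall i, S (p i)) /\ row_free (mat p).
Proof. by rewrite /dimS; case: ex_maxnP => i /asboolP. Qed.

Lemma dimS_max S n (p : 'I_n -> pt) :
  (forall i, S (p i)) -> row_free (mat p) -> (n <= dimS S)%N.
Proof.
move=> Sp fp; rewrite /dimS; case: ex_maxnP => i _ mx; apply: mx.
by apply/asboolP; exists p.
Qed.

Lemma dimS_bound S : (dimS S <= d + 1)%N.
Proof. by rewrite /dimS; case: ex_maxnP => i Pi _; exact: pdim_bound Pi. Qed.

Lemma dimS_span S (p : 'I_(dimS S) -> pt) :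
  (forall i, S (p i)) -> row_free (mat p) -> forall x, S x -> (lft x <= mat p)%MS.
Proof.
move=> Sp fp x Sx; apply/negPn/negP => nx.
have f2 : row_free (mat (app p x)) by rewrite mat_app; exact: free_app.
by have := dimS_max (app_in Sp Sx) f2; rewrite addn1 ltnn.
Qed.

Lemma dimS_span_le S n (q : 'I_n -> pt) :
  (forall x, S x -> (lft x <= mat q)%MS) -> (dimS S <= n)%N.
Proof.
move=> Sq; have [p [Sp fp]] := dimS_ex S; apply: free_le fp _.
by apply/row_subP => i; rewrite row_mat; apply: Sq.
Qed.

Lemma dimS_sub (S T : set pt) : S `<=` T -> (dimS S <= dimS T)%N.
Proof.
move=> ST; have [p [Sp fp]] := dimS_ex S.
by apply: (dimS_max (p := p)) => // i; apply: ST.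
Qed.

Lemma mat_fun_eq0 n (p : 'I_n -> pt) c beta :
  (forall i, dotp c (p i) = beta) -> mat p *m fcol c beta = 0.
Proof.
move=> h; apply/row_matrixP => i; rewrite row_mul row_mat lft_fcol h subrr row0.
by apply/matrixP => ? ?; rewrite !mxE mul0rn.
Qed.

Lemma dimS_off (S T : set pt) c beta y :
  S `<=` T -> (forall x, S x -> dotp c x = beta) -> T y -> dotp c y != beta ->
  (dimS S < dimS T)%N.
Proof.
move=> ST Sc Ty ny; have [p [Sp fp]] := dimS_ex S.
have ny' : ~~ (lft y <= mat p)%MS.
  apply/negP => /(submxMr (fcol c beta)); rewrite mat_fun_eq0 => [|i]; last exact: Sc.
  move/submx0null; rewrite lft_fcol => /matrixP /(_ 0 0); rewrite !mxE /= mulr1n.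
  by move/eqP; rewrite subr_eq0 (negbTE ny).
have f2 : row_free (mat (app p y)) by rewrite mat_app; exact: free_app.
by have := dimS_max (app_in (fun i => ST _ (Sp i)) Ty) f2; rewrite addn1.
Qed.

Lemma dimS_ge1 (S : set pt) x : S x -> (1 <= dimS S)%N.
Proof.
move=> Sx; apply: (dimS_max (p := fun _ : 'I_1 => x)) => // .
apply: inj_row_free => z /matrixP /(_ 0 (rshift d 0)).
rewrite !mxE big_ord1 !mxE /= -[rshift d 0]/(unsplit (inr 0)) unsplitK mxE eqxx mulr1 => z0.
by apply/matrixP => i j; rewrite !ord1 z0 mxE.
Qed.

Lemma dimS_pos (S : set pt) : (1 <= dimS S)%N -> exists x, S x.
Proof.
move=> h; have [p [Sp _]] := dimS_ex S; by exists (p (Ordinal h)).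
Qed.

Lemma dimS_two (S : set pt) x : S x -> (2 <= dimS S)%N -> exists y, S y /\ y != x.
Proof.
move=> Sx h; apply: contrapT => nex.
have : (dimS S <= 1)%N.
  apply: (dimS_span_le (q := fun _ : 'I_1 => x)) => y Sy.
  have -> : y = x.
    apply: contrapT => nyx; apply: nex; exists y; split => //; exact/eqP.
  by rewrite -(row_mat (fun _ : 'I_1 => x) 0) row_sub.
by rewrite leqNgt h.
Qed.

Lemma free_cast m n (e : m = n) (p : 'I_m -> pt) :
  row_free (mat p) -> row_free (mat (fun i => p (cast_ord (esym e) i))).
Proof.
case: n / e => h; suff -> : (fun i => p (cast_ord (esym erefl) i)) = p by [].
by apply: funext => i; rewrite cast_ord_id.
Qed.

Lemma affdimE (S : set pt) k : affdim S k <-> dimS S = k.+1.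
Proof.
split.
  move=> [[q [Sq fq]] nf]; apply/eqP; rewrite eqn_leq; apply/andP; split; last first.
    exact: dimS_max Sq fq.
  apply: (dimS_span_le (q := q)) => x Sx; apply/negPn/negP => nx.
  have f2 : row_free (mat (app q x)) by rewrite mat_app; exact: free_app.
  have := nf _ (fun i => app_in Sq Sx (cast_ord (esym (addn1 k.+1)) i)).
  by rewrite affindepE (free_cast (addn1 k.+1) f2).
move=> e; split.
  by have [p [Sp fp]] := dimS_ex S; rewrite e in p Sp fp *; exists p.
move=> p Sp; apply/negP => fp; have := dimS_max Sp fp.
by rewrite e ltnn.
Qed.

End Dim.

Lemma ex_max (R : realType) (I : finType) (Pr : pred I) (f : I -> R) :
  (exists i, Pr i) -> exists i, Pr i /\ forall j, Pr j -> f j <= f i.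
Proof.
move=> [i0 Pi0]; case: (@arg_maxP _ _ I i0 Pr f Pi0) => i Pi h.
by exists i; split => // j /h.
Qed.

Lemma ex_min (R : realType) (I : finType) (Pr : pred I) (f : I -> R) :
  (exists i, Pr i) -> exists i, Pr i /\ forall j, Pr j -> f i <= f j.
Proof.
move=> h; have [i [Pi m]] := ex_max (fun i => - f i) h.
by exists i; split => // j /m; rewrite lerN2.
Qed.

Section Poly.
Variables (R : realType) (d : nat).
Local Notation pt := 'rV[R]_d.

Definition gface (P F : set pt) : Prop :=
  exists (c : pt) (b : R), (forall x, P x -> dotp c x <= b) /\
    F = P `&` [set x | dotp c x = b].

Lemma face_gface P F : face P F -> gface P F.
Proof.
case=> [->|[->|[c [b [_ [h ->]]]]]]; last by exists c, b.
  exists 0, 1; split => [x _|]; first by rewrite dotp0l ler01.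
  apply/seteqP; split => x; first by [].
  case => _; rewrite /= dotp0l => e.
  by move: (@oner_neq0 R); rewrite -e eqxx.
exists 0, 0; split => [x _|]; first by rewrite dotp0l.
by apply/seteqP; split => x; [move=> Px; split => //; rewrite /= dotp0l | case].
Qed.

Lemma gface_face P F : gface P F -> face P F.
Proof.
move=> [c [b [h ->]]]; have [->|c0] := eqVneq c 0.
  have [->|b0] := eqVneq b 0.
    right; left; apply/seteqP; split => x /=; first by case.
    by move=> Px; split => //; rewrite dotp0l.
  left; apply/seteqP; split => x //= [_]; rewrite dotp0l => e.
  by move: b0; rewrite -e eqxx.
by right; right; exists c, b.
Qed.

Definition cvx (S : set pt) := forall x y s, S x -> S y -> 0 <= s -> s <= 1 ->
  S (s *: x + (1 - s) *: y).

Lemma gface_cvx P F : cvx P -> gface P F -> cvx F.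
Proof.
move=> cP [c [b [_ ->]]] x y s [Px cx] [Py cy] s0 s1; split; first exact: cP.
by rewrite /= dotp_comb cx cy -mulrDl subrKC mul1r.
Qed.

Lemma gface_sub P F : gface P F -> F `<=` P.
Proof. by move=> [c [b [_ ->]]] x []. Qed.

Variable V : seq pt.
Local Notation n := (size V).
Local Notation vt i := (V`_(val i)).
Local Notation P := (conv V).

Lemma conv_vt (i : 'I_n) : P (vt i).
Proof.
exists (fun j => (j == i)%:R); split.
- by move=> j; rewrite ler0n.
- by rewrite (bigD1 i) //= eqxx big1 ?addr0 // => j /negbTE ->.
- rewrite (bigD1 i) //= eqxx scale1r big1 ?addr0 // => j /negbTE ->.
  by rewrite scale0r.
Qed.

Lemma comb_diff (w : 'I_n -> R) c b :
  \sum_i w i = 1 ->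
  dotp c (\sum_i w i *: vt i) - b = \sum_i w i * (dotp c (vt i) - b).
Proof.
move=> s1; rewrite dotp_sum.
have -> : \sum_i w i * (dotp c (vt i) - b) = \sum_i w i * dotp c (vt i) - \sum_i w i * b.
  by rewrite -sumrB; apply: eq_bigr => i _; rewrite mulrBr.
by rewrite -mulr_suml s1 mul1r.
Qed.

Lemma comb_le (w : 'I_n -> R) c b :
  (forall i, 0 <= w i) -> \sum_i w i = 1 ->
  (forall i, w i != 0 -> dotp c (vt i) <= b) ->
  dotp c (\sum_i w i *: vt i) <= b.
Proof.
move=> w0 s1 h; rewrite -subr_le0 comb_diff // sumr_le0 // => i _.
have [->|wi] := eqVneq (w i) 0; first by rewrite mul0r.
by rewrite mulr_ge0_le0 // subr_le0 h.
Qed.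

Lemma comb_eq (w : 'I_n -> R) c b :
  (forall i, 0 <= w i) -> \sum_i w i = 1 ->
  (forall i, w i != 0 -> dotp c (vt i) <= b) ->
  dotp c (\sum_i w i *: vt i) = b -> forall i, w i != 0 -> dotp c (vt i) = b.
Proof.
move=> w0 s1 h e i wi; move/eqP: e; rewrite -subr_eq0 comb_diff // => /eqP e.
have E : \sum_j - (w j * (dotp c (vt j) - b)) = 0 by rewrite sumrN e oppr0.
have nn : forall j, true -> 0 <= - (w j * (dotp c (vt j) - b)).
  move=> j _; have [->|wj] := eqVneq (w j) 0; first by rewrite mul0r oppr0.
  by rewrite oppr_ge0 mulr_ge0_le0 // subr_le0 h.
have := @psumr_eq0P _ _ _ _ nn E i isT; move/eqP; rewrite oppr_eq0 mulf_eq0 (negbTE wi) subr_eq0.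
by move/eqP.
Qed.

Lemma comb_eq' (w : 'I_n -> R) c b :
  \sum_i w i = 1 ->
  (forall i, w i != 0 -> dotp c (vt i) = b) ->
  dotp c (\sum_i w i *: vt i) = b.
Proof.
move=> s1 h; apply/eqP; rewrite -subr_eq0 comb_diff // big1 // => i _.
by have [->|wi] := eqVneq (w i) 0; rewrite ?mul0r // h // subrr mulr0.
Qed.

Lemma conv_cvx : cvx P.
Proof.
move=> x y s [w [w0 w1 ->]] [w' [w0' w1' ->]] s0 s1.
exists (fun i => s * w i + (1 - s) * w' i); split.
- by move=> i; rewrite addr_ge0 // mulr_ge0 // subr_ge0.
- by rewrite big_split /= -!mulr_sumr w1 w1' !mulr1 subrKC.
- rewrite !scaler_sumr -big_split /=; apply: eq_bigr => i _.
  by rewrite !scalerA scalerDl.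
Qed.

Lemma gface_vt F x (w : 'I_n -> R) :
  gface P F -> F x -> (forall i, 0 <= w i) -> \sum_i w i = 1 ->
  x = \sum_i w i *: vt i -> forall i, w i != 0 -> F (vt i).
Proof.
move=> [c [b [h eF]]]; rewrite eF => -[Px cx] w0 w1 ex i wi.
split; first exact: conv_vt.
apply: (comb_eq w0 w1) => //; first by move=> j _; apply: h; apply: conv_vt.
by rewrite -ex.
Qed.

Lemma gface_le T psi kap :
  gface P T -> (forall i : 'I_n, T (vt i) -> dotp psi (vt i) <= kap) ->
  forall x, T x -> dotp psi x <= kap.
Proof.
move=> gT h x Tx; have [w [w0 w1 ex]] := gface_sub gT Tx.
rewrite ex; apply: comb_le => // i wi; apply: h.
exact: gface_vt gT Tx w0 w1 ex i wi.
Qed.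

Lemma gface_gface T psi kap :
  gface P T -> (forall x, T x -> dotp psi x <= kap) ->
  gface P (T `&` [set x | dotp psi x = kap]).
Proof.
move=> gT hT; case: (gT) => g [gam [hg eT]].
pose r (i : 'I_n) := if dotp g (vt i) < gam then
   `|dotp psi (vt i) - kap| / (gam - dotp g (vt i)) else 0.
pose s := 1 + \sum_i r i.
have r0 (i : 'I_n) : 0 <= r i.
  rewrite /r; case: ifP => // lt; rewrite divr_ge0 // subr_ge0 ltW //.
have s1 : 1 <= s by rewrite lerDl sumr_ge0.
have key (i : 'I_n) : ~ T (vt i) -> s * (dotp g (vt i) - gam) + (dotp psi (vt i) - kap) < 0.
  move=> nT; have lt : dotp g (vt i) < gam.
    rewrite lt_neqAle hg ?andbT; last exact: conv_vt.
    apply/eqP => e; apply: nT.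
    by rewrite eT; split => //; apply: conv_vt.
  have rle : r i <= s - 1.
    have -> : s - 1 = \sum_j r j by rewrite /s addrAC subrr add0r.
    by rewrite (bigD1 i) //= lerDl sumr_ge0.
  have pos : 0 < gam - dotp g (vt i) by rewrite subr_gt0.
  have : `|dotp psi (vt i) - kap| <= (s - 1) * (gam - dotp g (vt i)).
    have e : r i = `|dotp psi (vt i) - kap| / (gam - dotp g (vt i)) by rewrite /r lt.
    by rewrite -ler_pdivrMr // -e.
  move=> h1; have h2 := ler_norm (dotp psi (vt i) - kap).
  have -> : s * (dotp g (vt i) - gam) =
     - ((s - 1) * (gam - dotp g (vt i))) - (gam - dotp g (vt i)) by ring.
  lra.
have phiE x : dotp (s *: g + psi) x - (s * gam + kap) =
    s * (dotp g x - gam) + (dotp psi x - kap).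
  by rewrite dotpDl dotpZl; ring.
have vle (i : 'I_n) : dotp (s *: g + psi) (vt i) <= s * gam + kap.
  rewrite -subr_le0 phiE; have [Ti|nTi] := pselect (T (vt i)).
    move: (Ti); rewrite eT => -[_ ->]; rewrite subrr mulr0 add0r subr_le0.
    exact: hT.
  exact/ltW/key.
exists (s *: g + psi), (s * gam + kap); split.
  move=> x [w [w0 w1 ->]]; exact: comb_le.
apply/seteqP; split => x.
  move=> [Tx px]; move: (Tx); rewrite eT => -[Px gx]; split => //.
  by apply/eqP; rewrite -subr_eq0 phiE gx px /= !subrr mulr0 addr0.
move=> [Px /= ex]; have [w [w0 w1 exw]] := Px.
have hv : forall i, w i != 0 -> T (vt i).
  move=> i wi; apply: contrapT => nT; have := key i nT.
  rewrite -phiE (comb_eq w0 w1 (fun j _ => vle j) _ wi) ?subrr ?ltxx //.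
  by rewrite -exw.
have gx : dotp g x = gam.
  rewrite exw; apply: comb_eq' => // i wi; move: (hv i wi); rewrite eT.
  by case.
have Tx : T x by rewrite eT.
split => //; move/eqP: ex; rewrite -subr_eq0 phiE gx subrr mulr0 add0r subr_eq0.
by move/eqP.
Qed.

End Poly.

Section Vert.
Variables (R : realType) (d : nat).
Local Notation pt := 'rV[R]_d.

Lemma dotp_pos (c : pt) : c != 0 -> 0 < dotp c c.
Proof.
move=> c0; rewrite lt_neqAle sumr_ge0 ?andbT; last by move=> i _; exact: mulr_ge0_le0 || exact: sqr_ge0.
apply: contra c0 => /eqP e; apply/eqP/rowP => j; rewrite mxE.
have := @psumr_eq0P _ _ _ (fun i => c 0 i * c 0 i) (fun i _ => sqr_ge0 (c 0 i)) (esym e) j isT.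
by move/eqP; rewrite mulf_eq0 orbb => /eqP.
Qed.

Lemma span_lin m (M : 'M[R]_(m, d + 1)) (v u z : 'rV[R]_(d + 1)) al be :
  (z <= M)%MS -> (u <= M)%MS -> z = al *: v + be *: u -> al != 0 -> (v <= M)%MS.
Proof.
move=> zM uM ez al0.
have -> : v = al^-1 *: (z + (- be) *: u).
  by rewrite ez scaleNr addrK scalerA mulVf // scale1r.
by rewrite scalemx_sub // addmx_sub // scalemx_sub.
Qed.

Lemma seg (C : set pt) (a : pt) b x y : cvx C -> C x -> C y ->
  dotp a y < b -> b < dotp a x ->
  exists t, [/\ 0 < t, t < 1, C (t *: x + (1 - t) *: y) & dotp a (t *: x + (1 - t) *: y) = b].
Proof.
move=> cC Cx Cy yb bx; set D := dotp a x - dotp a y.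
have D0 : 0 < D by rewrite /D subr_gt0; exact: lt_trans yb bx.
exists ((b - dotp a y) / D); split.
- by rewrite divr_gt0 // subr_gt0.
- by rewrite ltr_pdivrMr // mul1r /D ltrD2r.
- apply: cC => //; first by rewrite ltW // divr_gt0 // subr_gt0.
  by rewrite ler_pdivrMr // mul1r /D lerD2r ltW.
- rewrite dotp_comb; move: D0; rewrite /D => D0; field.
  by rewrite lt0r_neq0.
Qed.

Lemma slice_le (C : set pt) (a : pt) b qp qm : cvx C -> C qp -> C qm ->
  b < dotp a qp -> dotp a qm < b ->
  (dimS C <= (dimS (C `&` hyperplane a b)).+1)%N.
Proof.
move=> cC Cp Cm bp mb; have [p [Sp fp]] := dimS_ex (C `&` hyperplane a b).
set M := mat (app p qp).
have hH x : C x -> dotp a x = b -> (lft x <= M)%MS.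
  by move=> Cx ax; apply: submx_trans (sub_mat_app _ _); apply: (dimS_span Sp fp).
have hp : (lft qp <= M)%MS by apply: lft_app.
have hm : (lft qm <= M)%MS.
  have [t [t0 t1 Cz az]] := seg cC Cp Cm mb bp.
  apply: (span_lin (hH _ Cz az) hp (al := 1 - t) (be := t)).
    by rewrite lft_comb addrC.
  by rewrite subr_eq0 eq_sym lt_eqF.
rewrite -addn1; apply: dimS_span_le => x Cx.
have [ab|ab|ab] := ltgtP (dotp a x) b; last exact: hH.
  have [t [t0 t1 Cz az]] := seg cC Cp Cx ab bp.
  apply: (span_lin (hH _ Cz az) hp (al := 1 - t) (be := t)).
    by rewrite lft_comb addrC.
  by rewrite subr_eq0 eq_sym lt_eqF.
have [t [t0 t1 Cz az]] := seg cC Cx Cm mb ab.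
apply: (span_lin (hH _ Cz az) hm (al := t) (be := 1 - t)).
  by rewrite lft_comb.
by rewrite gt_eqF.
Qed.

Variable V : seq pt.
Local Notation n := (size V).
Local Notation vt i := (V`_(val i)).
Local Notation P := (conv V).

Lemma conv_some_vt F x : gface P F -> F x -> exists i : 'I_n, F (vt i).
Proof.
move=> gF Fx; have [w [w0 w1 ex]] := gface_sub gF Fx.
have [i wi] : exists i, w i != 0.
  apply: contrapT => nw; move: w1; rewrite big1 => [/eqP|i _].
    by rewrite eq_sym oner_eq0.
  by apply: contrapT => wi; apply: nw; exists i; apply/eqP.
by exists i; exact: gface_vt gF Fx w0 w1 ex i wi.
Qed.

Lemma vertex_in n0 F : gface P F -> (exists x, F x) -> (dimS F <= n0)%N ->
  exists w, [/\ gface P w, dimS w = 1%N & w `<=` F].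
Proof.
elim: n0 F => [|n0 IH] F gF [x Fx] dF.
  by move: (dimS_ge1 Fx); rewrite leqNgt (leq_ltn_trans dF).
have d1 := dimS_ge1 Fx.
have [e1|d2] := eqVneq (dimS F) 1%N; first by exists F; split.
have d2' : (2 <= dimS F)%N by rewrite ltn_neqAle eq_sym d2 d1.
have [y [Fy yx]] := dimS_two Fx d2'.
set c := x - y.
have [i0 Fi0] := conv_some_vt gF Fx.
have [i [Fi imax]] := @ex_max _ _ (fun j : 'I_n => `[< F (vt j) >]) (fun j => dotp c (vt j))
  (ex_intro _ i0 (asboolT Fi0)).
move/asboolP: Fi => Fi.
have cle : forall z, F z -> dotp c z <= dotp c (vt i).
  apply: gface_le gF _ => j Fj; apply: imax; exact/asboolP.
set sub := F `&` [set z | dotp c z = dotp c (vt i)].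
have gs : gface P sub by apply: gface_gface.
have cy : dotp c y < dotp c (vt i).
  apply: lt_le_trans (cle _ Fx).
  rewrite -subr_gt0.
  have -> : dotp c x - dotp c y = dotp c c.
    by rewrite /dotp -sumrB; apply: eq_bigr => j _; rewrite /c !mxE mulrBr.
  by apply: dotp_pos; rewrite /c subr_eq0 eq_sym.
have lt : (dimS sub < dimS F)%N.
  apply: (dimS_off (c := c) (beta := dotp c (vt i)) (y := y)) => //;
    try (by move=> z []); by rewrite lt_eqF.
have ds : (dimS sub <= n0)%N by rewrite -ltnS (leq_trans lt dF).
have [w [gw dw sw]] := IH sub gs (ex_intro _ (vt i) (conj Fi erefl)) ds.
by exists w; split => // z /sw [].
Qed.

End Vert.

Section Rot.
Variables (R : realType) (d : nat).
Local Notation pt := 'rV[R]_d.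

Lemma gface_cut (P F : set pt) a b :
  gface P F -> gface (P `&` halfspace a b) (F `&` hyperplane a b).
Proof.
move=> [g [gam [hg ->]]]; exists (g - a), (gam - b); split.
  by move=> x [Px ax]; rewrite dotpBl lerB // hg.
apply/seteqP; split => x.
  by move=> [[Px gx] ax]; split; [split => //; rewrite /halfspace /= ax|rewrite /= dotpBl gx ax].
move=> [[Px ax] /=]; rewrite dotpBl => e.
have gx := hg x Px; move: ax; rewrite /halfspace /= => ax.
have gx' : dotp g x = gam by lra.
by split; [split|rewrite /hyperplane /=; lra].
Qed.

Lemma kill m (M : 'M[R]_(m, d + 1)) (v : 'rV[R]_(d + 1)) (w : 'cV[R]_(d + 1)) :
  (v <= M)%MS -> M *m w = 0 -> v *m w = 0.
Proof. by move=> /(submxMr w) + e; rewrite e => /submx0null. Qed.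

Variable V : seq pt.
Local Notation n := (size V).
Local Notation vt i := (V`_(val i)).
Local Notation P := (conv V).

Lemma rot_core G T g gam y h eta t :
  (forall x, P x -> dotp g x <= gam) -> G = P `&` [set x | dotp g x = gam] ->
  gface P T -> G `<=` T -> T y -> dotp g y < gam ->
  (forall x, G x -> dotp h x = eta) -> dotp h y = eta -> T t -> eta < dotp h t ->
  exists F, [/\ gface P F, G `<=` F, F `<=` T, (dimS G < dimS F)%N & (dimS F < dimS T)%N].
Proof.
move=> hg eG gT GT Ty gy hG hy Tt ht.
have [i0 [Ti0 hi0]] : exists i : 'I_n, T (vt i) /\ eta < dotp h (vt i).
  have [w [w0 w1 ex]] := gface_sub gT Tt.
  apply: contrapT => nex; move: ht; rewrite ex ltNge.
  rewrite (comb_le w0 w1) // => i wi; rewrite leNgt; apply/negP => lt.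
  apply: nex; exists i; split => //; exact: gface_vt gT Tt w0 w1 ex i wi.
pose rho (i : 'I_n) := (gam - dotp g (vt i)) / (dotp h (vt i) - eta).
have [i [/asboolP [Ti hi] imin]] := @ex_min _ _
   (fun i : 'I_n => `[< T (vt i) /\ eta < dotp h (vt i) >]) rho
   (ex_intro _ i0 (asboolT (conj Ti0 hi0))).
have gvt (j : 'I_n) : T (vt j) -> eta < dotp h (vt j) -> dotp g (vt j) < gam.
  move=> Tj hj; rewrite lt_neqAle hg ?andbT; last exact: conv_vt.
  apply/eqP => e.
  have : G (vt j) by rewrite eG; split => //; apply: conv_vt.
  by move/hG => e2; move: hj; rewrite e2 ltxx.
set ts := rho i.
have ts0 : 0 < ts by rewrite /ts /rho divr_gt0 // subr_gt0 ?gvt.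
have vle (j : 'I_n) : T (vt j) -> dotp (g + ts *: h) (vt j) <= gam + ts * eta.
  move=> Tj; rewrite dotpDl dotpZl.
  have [hj|hj] := ltP eta (dotp h (vt j)).
    have h1 : ts * (dotp h (vt j) - eta) <= gam - dotp g (vt j).
      by rewrite -ler_pdivlMr ?subr_gt0 //; exact: imin j (asboolT (conj Tj hj)).
    rewrite mulrBr in h1; lra.
  have := hg _ (conv_vt j); have : ts * (dotp h (vt j) - eta) <= 0.
    by apply: mulr_ge0_le0; [exact: ltW | rewrite subr_le0].
  rewrite mulrBr; lra.
set F := T `&` [set x | dotp (g + ts *: h) x = gam + ts * eta].
have gF : gface P F by apply: gface_gface => //; exact: (gface_le gT vle).
have Fi : F (vt i).
  split => //=; rewrite dotpDl dotpZl.
  have hpos : dotp h (vt i) - eta != 0 by rewrite subr_eq0 gt_eqF.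
  by rewrite /ts /rho; field.
exists F; split => //.
- by move=> x Gx; split; [exact: GT|rewrite /= dotpDl dotpZl hG //; move: Gx; rewrite eG => -[_ ->]].
- by move=> x [].
- apply: (dimS_off (c := g) (beta := gam) (y := vt i)).
  + by move=> x Gx; split; [exact: GT|rewrite /= dotpDl dotpZl hG //; move: Gx; rewrite eG => -[_ ->]].
  + by move=> x; rewrite eG => -[].
  + exact: Fi.
  + by rewrite lt_eqF // gvt.
- apply: (dimS_off (c := g + ts *: h) (beta := gam + ts * eta) (y := y)) => //.
  + by move=> x [].
  + by move=> x [].
  + by rewrite dotpDl dotpZl hy lt_eqF // ltrD2r.
Qed.

Lemma extend G : gface P G -> (exists x, G x) -> forall m T, (dimS T <= m)%N ->
  gface P T -> G `<=` T -> (dimS G < dimS T)%N ->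
  exists F, [/\ gface P F, G `<=` F, F `<=` T & dimS F = (dimS G).+1].
Proof.
move=> gG [x0 Gx0]; case: (gG) => g [gam [hg eG]].
elim => [|m IH] T dT gT GT lt.
  by move: (leq_trans lt dT).
have [e|ne] := eqVneq (dimS T) (dimS G).+1; first by exists T; split.
have lt2 : ((dimS G).+1 < dimS T)%N by rewrite ltn_neqAle eq_sym ne lt.
have [y [Ty nGy]] : exists y, T y /\ ~ G y.
  apply: contrapT => nex.
  have : T `<=` G.
    move=> z Tz; apply: contrapT => nGz; apply: nex; by exists z.
  by move/dimS_sub; rewrite leqNgt lt.
have gy : dotp g y < gam.
  rewrite lt_neqAle hg ?andbT; last exact: gface_sub gT _ Ty.
  apply/eqP => e; apply: nGy; rewrite eG; split => //; exact: gface_sub gT _ Ty.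
have [pG [SpG fpG]] := dimS_ex G.
have [pT [SpT fpT]] := dimS_ex T.
set B := mat (app pG y).
have nsub : ~~ (mat pT <= B)%MS.
  apply/negP => /(free_le fpT); rewrite addn1 => h.
  by move: (leq_ltn_trans h lt2); rewrite ltnn.
move: nsub; rewrite submxE => nz.
have [i [j nzij]] : exists i j, (mat pT *m cokermx B) i j != 0.
  apply: contrapT => nex; move: nz; rewrite matrix_eq0 => /negP; apply.
  apply/forallP => i; apply/forallP => j; apply/negPn/negP => nij.
  by apply: nex; exists i, j.
pose w : 'cV[R]_(d + 1) := cokermx B *m delta_mx j 0.
have BW : B *m w = 0 by rewrite /w mulmxA mulmx_coker mul0mx.
set h := (usubmx w)^T; set e0 := dsubmx w 0 0.
have valE x : (lft x *m w) 0 0 = dotp h x + e0.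
  by rewrite lft_fun mxE /= mulr1n.
have hG x : G x -> dotp h x = - e0.
  move=> Gx; apply/eqP; rewrite -subr_eq0 opprK -valE.
  rewrite (kill (M := B)) ?mxE //.
  exact: submx_trans (dimS_span SpG fpG Gx) (sub_mat_app _ _).
have hy : dotp h y = - e0.
  apply/eqP; rewrite -subr_eq0 opprK -valE (kill (M := B)) ?mxE //.
  exact: lft_app.
have ht : dotp h (pT i) != - e0.
  rewrite -subr_eq0 opprK -valE -row_mat -row_mul mxE /w.
  by rewrite mulmxA -colE mxE.
have [F [gF GF FT l1 l2]] : exists F, [/\ gface P F, G `<=` F, F `<=` T,
    (dimS G < dimS F)%N & (dimS F < dimS T)%N].
  have [lt3|lt3] := ltP (- e0) (dotp h (pT i)).
    exact: rot_core hg eG gT GT Ty gy hG hy (SpT i) lt3.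
  apply: (rot_core (h := - h) (eta := e0) (t := pT i)) hg eG gT GT Ty gy _ _ (SpT i) _.
  - by move=> x Gx; rewrite dotpNl hG // opprK.
  - by rewrite dotpNl hy opprK.
  - by rewrite dotpNl ltrNr lt_neqAle ht.
have dF : (dimS F <= m)%N by rewrite -ltnS (leq_trans l2 dT).
have [F' [gF' GF' FF' dF']] := IH F dF gF GF l1.
by exists F'; split => // z /FF' /FT.
Qed.

Lemma novert (a : pt) b F psi kap :
  (forall w, kface P 0 w -> w `&` hyperplane a b = set0) -> gface P F ->
  (forall y, F y -> dotp psi y <= kap) -> (exists x, F x /\ dotp psi x = kap) ->
  (forall z, F z -> dotp psi z = kap -> dotp a z = b) -> False.
Proof.
move=> NV gF le [x [Fx px]] imp.
have gs := gface_gface gF le.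
have [w [gw dw sw]] := vertex_in gs (ex_intro _ x (conj Fx px)) (leqnn _).
have kw : kface P 0 w by split; [exact: gface_face | apply/affdimE].
have [p wp] := dimS_pos (eq_leq (esym dw)).
have := NV w kw; move/seteqP => [+ _] => /(_ p) h.
have [Fp pp] := sw _ wp.
by apply: h; split => //; apply: imp.
Qed.

Lemma both (a : pt) b F :
  (forall w, kface P 0 w -> w `&` hyperplane a b = set0) -> gface P F ->
  (exists x, F x /\ dotp a x = b) ->
  (exists y, F y /\ dotp a y < b) /\ (exists z, F z /\ b < dotp a z).
Proof.
move=> NV gF [x [Fx ax]]; split; apply: contrapT => nex.
  apply: (novert (psi := - a) (kap := - b) NV gF).
  - move=> y Fy; rewrite dotpNl lerN2 leNgt; apply/negP => lt; apply: nex.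
    by exists y.
  - by exists x; rewrite dotpNl ax.
  - by move=> z _; rewrite dotpNl => /eqP; rewrite eqr_opp => /eqP.
apply: (novert (psi := a) (kap := b) NV gF).
- move=> y Fy; rewrite leNgt; apply/negP => lt; apply: nex; by exists y.
- by exists x.
- by [].
Qed.

Lemma lam (a c : pt) b beta :
  (forall x, (P `&` halfspace a b) x -> dotp c x <= beta) ->
  exists l, 0 <= l /\ forall x, P x -> dotp (c + l *: a) x <= beta + l * b.
Proof.
move=> hc.
have hcv (j : 'I_n) : b <= dotp a (vt j) -> dotp c (vt j) <= beta.
  by move=> h; apply: hc; split => //; apply: conv_vt.
have pair (i j : 'I_n) : dotp a (vt i) < b -> b < dotp a (vt j) ->
    (dotp c (vt i) - beta) * (dotp a (vt j) - b) <=
    (b - dotp a (vt i)) * (beta - dotp c (vt j)).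
  move=> hi hj.
  have [t [t0 t1 Cz az]] := seg (@conv_cvx _ _ V) (conv_vt j) (conv_vt i) hi hj.
  have cz : dotp c (t *: vt j + (1 - t) *: vt i) <= beta by apply: hc; split => //; rewrite /halfspace /= az.
  rewrite dotp_comb in az cz.
  set X := dotp c (vt i) - beta; set Y := dotp c (vt j) - beta.
  set p := b - dotp a (vt i); set q := dotp a (vt j) - b.
  have h2 : t * q = (1 - t) * p.
    apply/eqP; rewrite -subr_eq0.
    have -> : t * q - (1 - t) * p = (t * dotp a (vt j) + (1 - t) * dotp a (vt i)) - b
      by rewrite /q /p; ring.
    by rewrite az subrr.
  have h1 : t * Y + (1 - t) * X <= 0.
    have -> : t * Y + (1 - t) * X = (t * dotp c (vt j) + (1 - t) * dotp c (vt i)) - beta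
      by rewrite /X /Y; ring.
    by rewrite subr_le0 -dotp_comb.
  have e : (1 - t) * (X * q + p * Y) = q * (t * Y + (1 - t) * X) + ((1 - t) * p - t * q) * Y by ring.
  rewrite -h2 subrr mul0r addr0 in e.
  have q0 : 0 < q by rewrite /q subr_gt0.
  have : (1 - t) * (X * q + p * Y) <= 0 by rewrite e mulr_ge0_le0 // ltW.
  rewrite pmulr_rle0 ?subr_gt0 // => h3.
  have -> : p * (beta - dotp c (vt j)) = - (p * Y) by rewrite /Y; ring.
  lra.
have hA : (exists i : 'I_n, `[< dotp a (vt i) < b >] /\
   forall j : 'I_n, `[< dotp a (vt j) < b >] ->
     (dotp c (vt j) - beta) / (b - dotp a (vt j)) <= (dotp c (vt i) - beta) / (b - dotp a (vt i)))
   \/ (forall i : 'I_n, b <= dotp a (vt i)).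
    have [ex|nex] := pselect (exists i : 'I_n, dotp a (vt i) < b).
      left; apply: (@ex_max _ _ (fun i : 'I_n => `[< dotp a (vt i) < b >])
        (fun i : 'I_n => (dotp c (vt i) - beta) / (b - dotp a (vt i)))).
      case: ex => i hi; exists i; exact/asboolP.
    right => i; rewrite leNgt; apply/negP => h; apply: nex; by exists i.
case: hA => [[i [hi imax]]|noA].
  move/asboolP: hi => hi.
  set r := (dotp c (vt i) - beta) / (b - dotp a (vt i)).
  have pi : 0 < b - dotp a (vt i) by rewrite subr_gt0.
  pose l := if r <= 0 then 0 else r.
  have l0 : 0 <= l by rewrite /l; case: ifP => // /negbT; rewrite -ltNge => /ltW.
  have rl : r <= l by rewrite /l; case: ifP.
  exists l; split => //.
  move=> x [w [w0 w1 ->]]; apply: comb_le => // j _; rewrite dotpDl dotpZl.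
  rewrite -subr_le0.
  have -> : dotp c (vt j) + l * dotp a (vt j) - (beta + l * b)
     = (dotp c (vt j) - beta) + l * (dotp a (vt j) - b) by ring.
  have [hj|hj|hj] := ltgtP (dotp a (vt j)) b.
  - have rj := imax j (asboolT hj); rewrite -/r in rj.
    have pj : 0 < b - dotp a (vt j) by rewrite subr_gt0.
    rewrite ler_pdivrMr // in rj.
    have : r * (b - dotp a (vt j)) <= l * (b - dotp a (vt j)) by rewrite ler_pM2r.
    have -> : l * (dotp a (vt j) - b) = - (l * (b - dotp a (vt j))) by ring.
    lra.
  - have := hcv j (ltW hj).
    rewrite /l; case: ifP => [_|_].
      by rewrite mul0r addr0 subr_le0.
    have h4 : r * (dotp a (vt j) - b) <= beta - dotp c (vt j).
      rewrite /r mulrAC ler_pdivrMr // [X in _ <= X]mulrC; exact: pair i j hi hj.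
    lra.
  - by rewrite hj subrr mulr0 addr0 subr_le0 hcv // hj.
exists 0; split => // x [w [w0 w1 ->]]; apply: comb_le => // j _.
by rewrite scale0r addr0 mul0r addr0 hcv.
Qed.

End Rot.

Section Main.
Variables (R : realType) (d : nat).
Local Notation pt := 'rV[R]_d.
Variable V : seq pt.
Local Notation P := (conv V).
Variables (a : pt) (b : R).
Hypothesis NV : forall w, kface P 0 w -> w `&` hyperplane a b = set0.

Lemma slice_eq F : gface P F -> (exists x, F x /\ dotp a x = b) ->
  dimS F = (dimS (F `&` hyperplane a b)).+1.
Proof.
move=> gF ex; have [[qm [Fm am]] [qp [Fp ap]]] := both NV gF ex.
apply/eqP; rewrite eqn_leq; apply/andP; split.
  exact: slice_le (gface_cvx (@conv_cvx _ _ V) gF) Fp Fm ap am.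
apply: (dimS_off (c := a) (beta := b) (y := qp)) => //;
  try (by move=> x []); by rewrite gt_eqF.
Qed.

Lemma gfaceP : gface P P.
Proof.
exists 0, 0; split => [x _|]; first by rewrite dotp0l.
by apply/seteqP; split => x; [move=> Px; split => //; rewrite /= dotp0l | case].
Qed.

Lemma parent_sub u G : gface P u -> gface P G ->
  u `&` hyperplane a b `<=` G -> (exists x, u x /\ dotp a x = b) -> u `<=` G.
Proof.
move=> gu gG uHG ex; case: (gG) => g [gam [hg eG]].
have gule : forall x, u x -> dotp g x <= gam by move=> x /(gface_sub gu) /hg.
set W := u `&` [set x | dotp g x = gam].
have gW : gface P W by apply: gface_gface.
have eWH : W `&` hyperplane a b = u `&` hyperplane a b.
  apply/seteqP; split => x; first by case=> -[].
  move=> [ux hx]; split => //; split => //.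
  by move: (uHG x (conj ux hx)); rewrite eG => -[].
have [x [ux ax]] := ex.
have gx : dotp g x = gam by move: (uHG x (conj ux ax)); rewrite eG => -[].
have dW := slice_eq gW (ex_intro _ x (conj (conj ux gx) ax)).
have du := slice_eq gu ex.
move=> y uy; rewrite eG; split; first exact: gface_sub gu _ uy.
apply: contrapT => ny.
have lt : (dimS W < dimS u)%N.
  apply: (dimS_off (c := g) (beta := gam) (y := y)) => //;
    try (by move=> z []); by apply/eqP.
by move: lt; rewrite dW du eWH ltnn.
Qed.

End Main.

Unset Implicit Arguments.
Set Strict Implicit.

Theorem mainTheorem3 (R : realType) (d : nat) (P : set 'rV[R]_d)
    (a : 'rV[R]_d) (b : R) (k : nat) (u' v' u v : set 'rV[R]_d) :
  simple_polytope P ->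
  a != 0 ->
  (* the bounding hyperplane contains no vertex of P *)
  (forall w, kface P 0 w -> w `&` hyperplane a b = set0) ->
  (* the bounding hyperplane meets the interior of P *)
  (exists x, interior P x /\ hyperplane a b x) ->
  (k + 2 <= d)%N ->
  (* u', v' are new k-faces of P' = P ∩ H^+ *)
  kface (P `&` halfspace a b) k u' -> u' `<=` hyperplane a b ->
  kface (P `&` halfspace a b) k v' -> v' `<=` hyperplane a b ->
  (* with parent (k+1)-faces u, v of P *)
  kface P k.+1 u -> u' = hyperplane a b `&` u ->
  kface P k.+1 v -> v' = hyperplane a b `&` v ->
  (exists F', kface (P `&` halfspace a b) k.+1 F' /\ u' `<=` F' /\ v' `<=` F') <->
  (exists F, kface P k.+2 F /\ u `<=` F /\ v `<=` F).
Proof.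
move=> [[[V eP] dP] _] _ NV _ k2 [fu' du'] u'H [fv' dv'] v'H [fu du] eu [fv dv] ev.
subst P.
move/affdimE: du' => du'; move/affdimE: dv' => dv'.
move/affdimE: du => du; move/affdimE: dv => dv; move/affdimE: dP => dP.
have gu := face_gface fu; have gv := face_gface fv.
have [xu u'xu] : exists x, u' x by apply: dimS_pos; rewrite du'.
have [xv v'xv] : exists x, v' x by apply: dimS_pos; rewrite dv'.
have exu : exists x, u x /\ dotp a x = b.
  by exists xu; move: u'xu; rewrite eu => -[].
have exv : exists x, v x /\ dotp a x = b.
  by exists xv; move: v'xv; rewrite ev => -[].
have du'' : dimS (u `&` hyperplane a b) = k.+1.
  by rewrite -du' eu setIC.
split.
- move=> [G' [[fG' dG'] [u'G' v'G']]].
  move/affdimE: dG' => dG'.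
  have [c [beta [hc eG']]] := face_gface fG'.
  have [l [l0 hl]] := lam hc.
  set G := conv V `&` [set x | dotp (c + l *: a) x = beta + l * b].
  have gG : gface (conv V) G by exists (c + l *: a), (beta + l * b).
  have eGH : G `&` hyperplane a b = G' `&` hyperplane a b.
    apply/seteqP; split => x.
      move=> [[Px ex] hx]; split => //; rewrite eG'; split.
        by split => //; rewrite /halfspace /= hx.
      by move: ex; rewrite /= dotpDl dotpZl hx => /addIr.
    move=> [+ hx]; rewrite eG' => -[[Px _] cx]; split => //; split => //.
    by rewrite /= dotpDl dotpZl cx hx.
  have sub' (w w' : set 'rV[R]_d) : w' `<=` G' -> w' = hyperplane a b `&` w ->
      w `&` hyperplane a b `<=` G.
    move=> wG' ew x [wx hx].
    have : (G' `&` hyperplane a b) x by split => //; apply: wG'; rewrite ew.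
    by rewrite -eGH => -[].
  have uG := parent_sub NV gu gG (sub' _ _ u'G' eu) exu.
  have vG := parent_sub NV gv gG (sub' _ _ v'G' ev) exv.
  have dG := slice_eq NV gG (let: ex_intro x (conj ux ax) := exu in ex_intro _ x (conj (uG x ux) ax)).
  rewrite eGH in dG.
  have [sG'|nsG'] := pselect (G' `<=` hyperplane a b).
    exists G; split => //; split; first exact: gface_face.
    apply/affdimE; rewrite dG.
    have -> : G' `&` hyperplane a b = G' by apply/seteqP; split => x; [case | move=> Gx; split => //; exact: sG'].
    by rewrite dG'.
  have [z [G'z az]] : exists z, G' z /\ ~ hyperplane a b z.
    apply: contrapT => nex; apply: nsG' => z Gz; apply: contrapT => nz; apply: nex.
    by exists z.
  have lt1 : (dimS (G' `&` hyperplane a b) < dimS G')%N.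
    apply: (dimS_off (c := a) (beta := b) (y := z)) => //;
      try (by move=> x []); by apply/eqP.
  have ge1 : (k.+1 <= dimS (G' `&` hyperplane a b))%N.
    rewrite -du'; apply: dimS_sub => x u'x; split; first exact: u'G'.
    exact: u'H.
  have dGk : dimS G = k.+2.
    by rewrite dG; congr S; apply/eqP; rewrite eqn_leq ge1 -ltnS -dG' lt1.
  have lt2 : (dimS G < dimS (conv V))%N by rewrite dGk dP ltnS -addn2.
  have [F [gF GF _ dF]] := extend gG (let: ex_intro x (conj ux _) := exu in ex_intro _ x (uG x ux))
      (leqnn (dimS (conv V))) (@gfaceP _ _ V) (gface_sub gG) lt2.
  exists F; split; last by split => x /[dup] => [/uG|/vG] => /GF.
  by split; [exact: gface_face | apply/affdimE; rewrite dF dGk].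
- move=> [F [[fF dF] [uF vF]]]; move/affdimE: dF => dF.
  have gF := face_gface fF.
  exists (F `&` hyperplane a b); split; last first.
    split => x.
      by rewrite eu => -[hx ux]; split => //; apply: uF.
    by rewrite ev => -[hx vx]; split => //; apply: vF.
  split; first exact/gface_face/gface_cut.
  apply/affdimE.
  have := slice_eq NV gF (let: ex_intro x (conj ux ax) := exu in ex_intro _ x (conj (uF x ux) ax)).
  by rewrite dF => -[].
Qed.
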